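(* Let $L:\mathbb{R}^n\times\mathbb{R}^n\to\mathbb{R}$ be smooth and $\tau>0$. Consider the midpoint scheme (Lagrangian form) $$\frac{p_{k+1}-p_k}{\tau}=D_1L\Big(\frac{q_{k+1}+q_k}{2},\frac{q_{k+1}-q_k}{\tau}\Big),\qquad \frac{p_{k+1}+p_k}{2}=D_2L\Big(\frac{q_{k+1}+q_k}{2},\frac{q_{k+1}-q_k}{\tau}\Big).$$ Let $W\subset\mathbb{R}^{2n}$ be open and $F:W\to\mathbb{R}^{2n}$ smooth such that for every $(q_k,p_k)\in W$, $(q_{k+1},p_{k+1})=F(q_k,p_k)$ satisfies these equations. Then $F$ is symplectic: $F^*\big(\sum_i dp_i\wedge dq^i\big)=\sum_i dp_i\wedge dq^i$.
   Context: $D_1L$, $D_2L$ denote the partial derivatives of $L(q,v)$ with respect to $q$ and $v$. *)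

(* Defs.v *)
From HB Require Import structures.
From mathcomp Require Import all_boot all_order all_algebra.
From mathcomp Require Import all_classical all_reals all_analysis.
Set Implicit Arguments. Unset Strict Implicit. Unset Printing Implicit Defensive.
Import Order.TTheory GRing.Theory Num.Theory.
Import numFieldNormedType.Exports.
Local Open Scope classical_set_scope.
Local Open Scope ring_scope.

Fixpoint iterD (R : realType) (V W : normedModType R) (vs : seq V) (f : V -> W)
  : V -> W :=
  match vs with
  | [::] => f
  | v :: vs' => fun x => 'D_v (iterD vs' f) x
  end.

Definition smooth_on (R : realType) (V W : normedModType R) (U : set V)
  (f : V -> W) : Prop :=
  forall (vs : seq V) (x : V), U x -> differentiable (iterD vs f) x.

Definition ebasis (R : realType) (n : nat) (i : 'I_n) : 'rV[R]_n :=
  delta_mx 0 i.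

Definition D1L (R : realType) (n : nat) (L : 'rV[R]_n * 'rV[R]_n -> R)
  (q v : 'rV[R]_n) : 'rV[R]_n :=
  \row_i 'D_(ebasis R i, 0) L (q, v).
Definition D2L (R : realType) (n : nat) (L : 'rV[R]_n * 'rV[R]_n -> R)
  (q v : 'rV[R]_n) : 'rV[R]_n :=
  \row_i 'D_(0, ebasis R i) L (q, v).

Definition midpoint_step (R : realType) (n : nat) (L : 'rV[R]_n * 'rV[R]_n -> R)
  (tau : R) (q0 p0 q1 p1 : 'rV[R]_n) : Prop :=
  let qm := (2%:R)^-1 *: (q1 + q0) in
  let vm := tau^-1 *: (q1 - q0) in
  tau^-1 *: (p1 - p0) = D1L L qm vm /\
  (2%:R)^-1 *: (p1 + p0) = D2L L qm vm.

(* the 2-form omega = sum_i dp_i /\ dq^i on tangent vectors (dq,dp) *)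
Definition omega (R : realType) (n : nat) (u w : 'rV[R]_n * 'rV[R]_n) : R :=
  \sum_(i < n) (u.2 0 i * w.1 0 i - w.2 0 i * u.1 0 i).

(* Main.v *)
Require Import Defs.
From HB Require Import structures.
From mathcomp Require Import all_boot all_order all_algebra.
From mathcomp Require Import all_classical all_reals all_analysis.
From mathcomp Require Import ring lra.
Import Order.TTheory GRing.Theory Num.Theory.
Import numFieldNormedType.Exports.
Local Open Scope classical_set_scope.
Local Open Scope ring_scope.

Section H.
Variable R : realType.

Lemma D_comp_lin (U V W : normedModType R) (g : V -> W) (f : U -> V) x v :
  linear g -> continuous g -> differentiable f x ->
  'D_v (g \o f) x = g ('D_v f x).
Proof.
move=> lg cg df.
pose gL : {linear V -> W} := HB.pack g (GRing.isLinear.Build _ _ _ _ _ lg).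
have dg : forall y, differentiable g y.
  by move=> y; rewrite -[g]/(gL : _ -> _); apply: linear_differentiable.
rewrite deriveE; last exact: differentiable_comp.
rewrite diff_comp // deriveE //=.
by rewrite -[g]/(gL : _ -> _) diff_lin.
Qed.

Lemma D_comp (U V W : normedModType R) (g : V -> W) (f : U -> V) x v :
  differentiable f x -> differentiable g (f x) ->
  'D_v (g \o f) x = 'D_('D_v f x) g (f x).
Proof.
move=> df dg; rewrite deriveE; last exact: differentiable_comp.
by rewrite diff_comp // !deriveE.
Qed.

Lemma diff_scalel (V : normedModType R) (v : V) (s : R) :
  differentiable (fun t : R => t *: v) s.
Proof. exact: ex_diff. Qed.

Lemma D_scalel (V : normedModType R) (v : V) (s : R) :
  'D_1 (fun t : R => t *: v) s = v.
Proof. by rewrite deriveE ?diff_scalel // diff_val scale1r. Qed.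

Lemma diff_line (V : normedModType R) (y v : V) (s : R) :
  differentiable (fun t : R => y + t *: v) s.
Proof. by apply: differentiableD; [exact: differentiable_cst|exact: diff_scalel]. Qed.

Lemma D_line (V : normedModType R) (y v : V) (s : R) :
  'D_1 (fun t : R => y + t *: v) s = v.
Proof.
rewrite deriveD ?derive_cst ?add0r ?D_scalel //.
- exact/diff_derivable/diff_scalel.
Qed.

Lemma line_is_derive (V : normedModType R) (g : V -> R) (y v : V) (s : R) :
  (forall z, differentiable g z) ->
  is_derive s 1 (fun t => g (y + t *: v)) ('D_v g (y + s *: v)).
Proof.
move=> dg; apply: DeriveDef.
  have H := differentiable_comp (diff_line _ y v s) (dg (y + s *: v)).
  apply: diff_derivable. exact H.
rewrite (@D_comp R V R g (fun t : R => y + t *: v)) ?D_line //.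
Qed.

Lemma mvt_line (V : normedModType R) (g : V -> R) (y v : V) (s : R) :
  (forall z, differentiable g z) -> 0 < s ->
  exists2 c, 0 < c < s & g (y + s *: v) - g y = 'D_v g (y + c *: v) * s.
Proof.
move=> dg s0.
have cont : {within `[0, s], continuous (fun t => g (y + t *: v))}.
  apply: continuous_subspaceT => t.
  apply: differentiable_continuous.
  exact: (differentiable_comp (diff_line _ y v t) (dg _)).
have [c cin E] := @MVT R (fun t => g (y + t *: v)) (fun t => 'D_v g (y + t *: v)) 0 s s0
  (fun t _ => @line_is_derive V g y v t dg) cont.
exists c; first by rewrite in_itv /= in cin.
by move: E; rewrite /= scale0r addr0 subr0.
Qed.


Lemma D_shift (V : normedModType R) (f : V -> R) (c z h : V) :
  differentiable f (z + c) -> 'D_h (fun y => f (y + c)) z = 'D_h f (z + c).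
Proof.
move=> df.
have ds : differentiable (fun y : V => y + c) z.
  apply: differentiableD; [exact: ex_diff | exact: differentiable_cst].
rewrite (@D_comp V V R f (fun y => y + c)) //.
by rewrite deriveD ?derive_cst ?derive_id ?addr0.
Qed.

Lemma schwarz_half (V : normedModType R) (f : V -> R) (x h k : V) (s : R) :
  (forall y, differentiable f y) -> (forall a y, differentiable ('D_a f) y) ->
  0 < s -> exists c1 c2, [/\ 0 < c1 < s, 0 < c2 < s &
  f (x + s *: h + s *: k) - f (x + s *: h) - f (x + s *: k) + f x =
    'D_k ('D_h f) (x + c1 *: h + c2 *: k) * (s * s)].
Proof.
move=> d1 d2 s0.
pose g1 := fun z => f (z + s *: k) - f z.
have dg1 : forall z, differentiable g1 z.
  move=> z; apply: differentiableB; last exact: d1.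
  have ds : differentiable (fun y : V => y + s *: k) z.
    apply: differentiableD; [exact: ex_diff | exact: differentiable_cst].
  exact: (differentiable_comp ds (d1 _)).
have Dg1 : forall z, 'D_h g1 z = 'D_h f (z + s *: k) - 'D_h f z.
  move=> z; rewrite /g1 deriveB ?D_shift //.
  apply: diff_derivable.
  have ds : differentiable (fun y : V => y + s *: k) z.
    apply: differentiableD; [exact: ex_diff | exact: differentiable_cst].
  exact: (differentiable_comp ds (d1 _)).
  exact/diff_derivable/d1.
have [c1 /andP[c10 c1s] E1] := @mvt_line V g1 x h s dg1 s0.
have [c2 /andP[c20 c2s] E2] := @mvt_line V _ (x + c1 *: h) k s (d2 h) s0.
exists c1, c2; split; rewrite ?c10 ?c1s ?c20 ?c2s //.
rewrite mulrA -E2 -Dg1 -E1 /g1.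
ring.
Qed.
Lemma tri (a b c d e : R) : `|a - b| < e -> `|c - d| < e -> b = d ->
  `|a - c| < e + e.
Proof.
move=> h1 h2 bd; subst b; have -> : a - c = (a - d) + (d - c) by rewrite addrA subrK.
by rewrite (le_lt_trans (ler_normD _ _)) // ltrD // distrC.
Qed.

Lemma schwarz (V : normedModType R) (f : V -> R) (x h k : V) :
  (forall y, differentiable f y) -> (forall a y, differentiable ('D_a f) y) ->
  (forall a b y, differentiable ('D_a ('D_b f)) y) ->
  'D_k ('D_h f) x = 'D_h ('D_k f) x.
Proof.
move=> d1 d2 d3.
pose A : V -> R := fun y => 'D_k ('D_h f) y.
pose B : V -> R := fun y => 'D_h ('D_k f) y.
change (A x = B x).
suff H : forall e, 0 < e -> `|A x - B x| < e + e.
  apply/eqP; rewrite -subr_eq0 -normr_le0; apply/ler_addgt0Pr => e e0.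
  by rewrite add0r (splitr e); apply/ltW/H; rewrite divr_gt0.
move=> e e0.
have nA : \forall t \near x, `|A x - A t| < e.
  move: e e0; apply: cvgr_dist_lt; exact: (differentiable_continuous (d3 k h x)).
have nB : \forall t \near x, `|B x - B t| < e.
  move: (e) (e0); apply: cvgr_dist_lt; exact: (differentiable_continuous (d3 h k x)).
have nAB : \forall t \near x, `|A x - A t| < e /\ `|B x - B t| < e.
  exact: filterS2 (fun y a b => conj a b) nA nB.
have [d d0 Hd] := (nbhs_normP _ _).1 nAB.
pose s := d / (`|h| + `|k| + 1).
have hk0 : 0 < `|h| + `|k| + 1 by rewrite ltr_wpDl ?addr_ge0.
have s0 : 0 < s by rewrite divr_gt0.
have ds : d = s * (`|h| + `|k| + 1) by rewrite /s divfK ?gt_eqF.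
have near1 : forall c1 c2, 0 < c1 < s -> 0 < c2 < s ->
    `|x - (x + c1 *: h + c2 *: k)| < d.
  move=> c1 c2 /andP[c10 c1s] /andP[c20 c2s].
  rewrite -addrA opprD addrA subrr sub0r normrN.
  rewrite (le_lt_trans (ler_normD _ _)) // !normrZ !gtr0_norm //.
  have : c1 * `|h| <= s * `|h| by rewrite ler_wpM2r // ltW.
  have : c2 * `|k| <= s * `|k| by rewrite ler_wpM2r // ltW.
  nra.
have near2 : forall c1 c2, 0 < c1 < s -> 0 < c2 < s ->
    `|x - (x + c1 *: k + c2 *: h)| < d.
  move=> c1 c2 /andP[c10 c1s] /andP[c20 c2s].
  rewrite -addrA opprD addrA subrr sub0r normrN.
  rewrite (le_lt_trans (ler_normD _ _)) // !normrZ !gtr0_norm //.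
  have : c2 * `|h| <= s * `|h| by rewrite ler_wpM2r // ltW.
  have : c1 * `|k| <= s * `|k| by rewrite ler_wpM2r // ltW.
  nra.
have [c1 [c2 [ic1 ic2 E1]]] := @schwarz_half V f x h k s d1 d2 s0.
have [c3 [c4 [ic3 ic4 E2]]] := @schwarz_half V f x k h s d1 d2 s0.
have AB : A (x + c1 *: h + c2 *: k) = B (x + c3 *: k + c4 *: h).
  have ss : s * s != 0 by rewrite mulf_neq0 ?gt_eqF.
  apply: (@mulIf R (s * s) ss).
  rewrite /A /B -E1 -E2 (addrAC x (s *: h)).
  ring.
have [HA _] := Hd _ (near1 _ _ ic1 ic2).
have [_ HB] := Hd _ (near2 _ _ ic3 ic4).
exact: (tri _ _ _ _ _ HA HB AB).
Qed.

End H.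



Section H6.
Variable R : realType.

Lemma lin_diff (V W : normedModType R) (g : V -> W) y :
  linear g -> continuous g -> differentiable g y.
Proof.
move=> lg cg.
pose gL : {linear V -> W} := HB.pack g (GRing.isLinear.Build _ _ _ _ _ lg).
by rewrite -[g]/(gL : _ -> _); apply: linear_differentiable.
Qed.

Lemma fst_lin (V W : normedModType R) : linear (@fst V W).
Proof. by []. Qed.
Lemma snd_lin (V W : normedModType R) : linear (@snd V W).
Proof. by []. Qed.
Lemma fst_cont (V W : normedModType R) : continuous (@fst V W).
Proof. by move=> P; apply: cvg_fst. Qed.
Lemma snd_cont (V W : normedModType R) : continuous (@snd V W).
Proof. by move=> P; apply: cvg_snd. Qed.
Lemma entry_lin n (i : 'I_n) : linear (fun M : 'rV[R]_n => M 0 i).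
Proof. by move=> a b c; rewrite !mxE. Qed.

Lemma D_fst (U V W : normedModType R) (f : U -> V * W) x v :
  differentiable f x -> 'D_v (fun z => (f z).1) x = ('D_v f x).1.
Proof.
move=> df; exact: (@D_comp_lin R U (V * W)%type V fst f x v (@fst_lin V W) (@fst_cont V W) df).
Qed.
Lemma D_snd (U V W : normedModType R) (f : U -> V * W) x v :
  differentiable f x -> 'D_v (fun z => (f z).2) x = ('D_v f x).2.
Proof.
move=> df; exact: (@D_comp_lin R U (V * W)%type W snd f x v (@snd_lin V W) (@snd_cont V W) df).
Qed.
Lemma D_entry (U : normedModType R) n (i : 'I_n) (f : U -> 'rV[R]_n) x v :
  differentiable f x -> 'D_v (fun z => f z 0 i) x = ('D_v f x) 0 i.
Proof.
move=> df.
have := @D_comp_lin R U 'rV[R]_n R (fun M => M 0 i) f x v (@entry_lin n i).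
move=> /(_ _ df); apply.
exact: coord_continuous.
Qed.
Lemma diff_fst (U V W : normedModType R) (f : U -> V * W) x :
  differentiable f x -> differentiable (fun z => (f z).1) x.
Proof. move=> df; exact: (differentiable_comp df (@lin_diff (V * W)%type V fst (f x) (@fst_lin V W) (@fst_cont V W))). Qed.
Lemma diff_snd (U V W : normedModType R) (f : U -> V * W) x :
  differentiable f x -> differentiable (fun z => (f z).2) x.
Proof. move=> df; exact: (differentiable_comp df (@lin_diff (V * W)%type W snd (f x) (@snd_lin V W) (@snd_cont V W))). Qed.

Lemma D_pair (U V W : normedModType R) (f : U -> V) (g : U -> W) x v :
  differentiable f x -> differentiable g x ->
  'D_v (fun z => (f z, g z)) x = ('D_v f x, 'D_v g x).
Proof.
move=> df dg; rewrite deriveE; last exact: differentiable_pair.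
by rewrite diff_pair // !deriveE.
Qed.

Lemma pair_ext (A B : Type) (p q : A * B) : p.1 = q.1 -> p.2 = q.2 -> p = q.
Proof. by case: p q => [? ?] [? ?] /= -> ->. Qed.

Lemma dec_vec n (k : 'rV[R]_n * 'rV[R]_n) :
  k = \sum_(i < n) (k.1 0 i *: (ebasis R i, 0) + k.2 0 i *: (0, ebasis R i)).
Proof.
have m1 := big_morph (@fst 'rV[R]_n 'rV[R]_n) (id1 := 0) (op1 := +%R) (id2 := 0) (op2 := +%R) (fun a b => erefl) erefl.
have m2 := big_morph (@snd 'rV[R]_n 'rV[R]_n) (id1 := 0) (op1 := +%R) (id2 := 0) (op2 := +%R) (fun a b => erefl) erefl.
apply: pair_ext; rewrite ?m1 ?m2 /=.
  rewrite [LHS]row_sum_delta; apply: eq_bigr => i _ /=.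
  by rewrite scaler0 addr0.
rewrite [LHS]row_sum_delta; apply: eq_bigr => i _ /=.
by rewrite scaler0 add0r.
Qed.

Lemma Dlin n (L : 'rV[R]_n * 'rV[R]_n -> R) (y h k : 'rV[R]_n * 'rV[R]_n) :
  (forall z, differentiable L z) -> (forall a z, differentiable ('D_a L) z) ->
  'D_h ('D_k L) y = \sum_(i < n) (k.1 0 i * 'D_h ('D_(ebasis R i, 0) L) y
                                  + k.2 0 i * 'D_h ('D_(0, ebasis R i) L) y).
Proof.
move=> d1 d2.
pose Fi := fun i : 'I_n => k.1 0 i *: 'D_(ebasis R i, 0) L + k.2 0 i *: 'D_(0, ebasis R i) L.
have eqf : 'D_k L = \sum_(i < n) Fi i.
  apply/funext => z; rewrite fct_sumE deriveE // {1}(@dec_vec n k) linear_sum.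
  apply: eq_bigr => i _; rewrite linearD !linearZ /= -!deriveE //.
rewrite eqf derive_sum; last first.
  move=> i; apply: derivableD; apply: derivableZ; exact: diff_derivable (d2 _ _).
apply: eq_bigr => i _; rewrite /Fi deriveD ?deriveZ //.
- exact: diff_derivable (d2 _ _).
- exact: diff_derivable (d2 _ _).
- apply: derivableZ; exact: diff_derivable (d2 _ _).
- apply: derivableZ; exact: diff_derivable (d2 _ _).
Qed.

Lemma D_scale_fun (U W : normedModType R) (f : U -> W) (c : R) x v :
  differentiable f x -> 'D_v (fun z => c *: f z) x = c *: 'D_v f x.
Proof. move=> df; have dd : derivable f x v by exact: diff_derivable.
exact: (deriveZ c dd). Qed.
Lemma D_add_fun (U W : normedModType R) (f g : U -> W) x v :
  differentiable f x -> differentiable g x ->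
  'D_v (fun z => f z + g z) x = 'D_v f x + 'D_v g x.
Proof. move=> df dg; have ddf : derivable f x v by exact: diff_derivable.
have ddg : derivable g x v by exact: diff_derivable.
exact: (deriveD ddf ddg). Qed.
Lemma D_sub_fun (U W : normedModType R) (f g : U -> W) x v :
  differentiable f x -> differentiable g x ->
  'D_v (fun z => f z - g z) x = 'D_v f x - 'D_v g x.
Proof. move=> df dg; have ddf : derivable f x v by exact: diff_derivable.
have ddg : derivable g x v by exact: diff_derivable.
exact: (deriveB ddf ddg). Qed.
End H6.



Lemma alg (R : realType) (tau A1 A2 B1 B2 U1 U2 W1 W2 Pu Qu Pw Qw hu1 hu2 hw1 hw2 : R) :
  tau != 0 ->
  tau^-1 * (A2 - U2) = Pu -> 2^-1 * (A2 + U2) = Qu ->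
  tau^-1 * (B2 - W2) = Pw -> 2^-1 * (B2 + W2) = Qw ->
  hu1 = 2^-1 * (A1 + U1) -> hu2 = tau^-1 * (A1 - U1) ->
  hw1 = 2^-1 * (B1 + W1) -> hw2 = tau^-1 * (B1 - W1) ->
  A2 * B1 - B2 * A1 - (U2 * W1 - W2 * U1) =
  tau * ((hw1 * Pu + hw2 * Qu) - (hu1 * Pw + hu2 * Qw)).
Proof.
move=> t0 <- <- <- <- -> -> -> ->.
field.
exact: t0.
Qed.

Theorem mainTheorem3 (R : realType) (n : nat)
  (L : 'rV[R]_n * 'rV[R]_n -> R) (tau : R)
  (W : set ('rV[R]_n * 'rV[R]_n)) (F : 'rV[R]_n * 'rV[R]_n -> 'rV[R]_n * 'rV[R]_n) :
  smooth_on setT L -> 0 < tau -> open W -> smooth_on W F ->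
  (forall x : 'rV[R]_n * 'rV[R]_n, W x ->
     midpoint_step L tau x.1 x.2 (F x).1 (F x).2) ->
  forall x : 'rV[R]_n * 'rV[R]_n, W x ->
    forall u w : 'rV[R]_n * 'rV[R]_n,
      omega ('d F x u) ('d F x w) = omega u w.
Proof.
move=> sL tau0 oW sF HF x Wx u w.
have d1 : forall z, differentiable L z := fun z => sL [::] z Logic.I.
have d2 : forall a z, differentiable ('D_a L) z := fun a z => sL [:: a] z Logic.I.
have d3 : forall a b z, differentiable ('D_a ('D_b L)) z :=
  fun a b z => sL [:: a; b] z Logic.I.
have dF : differentiable F x := sF [::] x Wx.
have nW : \forall z \near x, W z by apply: oW.
rewrite -!deriveE //.
pose G := fun z : 'rV[R]_n * 'rV[R]_n =>
  (2^-1 *: ((F z).1 + z.1), tau^-1 *: ((F z).1 - z.1)).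
have did : differentiable (fun z : 'rV[R]_n * 'rV[R]_n => z) x.
  exact: ex_diff.
have dF1 : differentiable (fun z => (F z).1) x by exact: diff_fst.
have dx1 : differentiable (fun z : 'rV[R]_n * 'rV[R]_n => z.1) x by apply: diff_fst.
have dG : differentiable G x.
  apply: differentiable_pair; apply: differentiableZ;
    [exact: differentiableD | exact: differentiableB].
have DG : forall v, 'D_v G x =
    (2^-1 *: (('D_v F x).1 + v.1), tau^-1 *: (('D_v F x).1 - v.1)).
  move=> v; rewrite D_pair; last 2 first.
  - apply: differentiableZ; exact: differentiableD.
  - apply: differentiableZ; exact: differentiableB.
  rewrite !D_scale_fun; last 2 first.
  - exact: differentiableB.
  - exact: differentiableD.
  rewrite D_add_fun // D_sub_fun // D_fst // (@D_fst R _ _ _ (fun z => z) x v did) derive_id //.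
have E : forall i,
  (\forall z \near x, tau^-1 *: ((F z).2 0 i - z.2 0 i) = 'D_(ebasis R i, 0) L (G z)) /\
  (\forall z \near x, 2^-1 *: ((F z).2 0 i + z.2 0 i) = 'D_(0, ebasis R i) L (G z)).
  move=> i; split; apply: filterS nW => z Wz; have [h1 h2] := HF z Wz.
  - by move: (congr1 (fun M : 'rV[R]_n => M 0 i) h1); rewrite !mxE.
  - by move: (congr1 (fun M : 'rV[R]_n => M 0 i) h2); rewrite !mxE.
have dsnd : differentiable (fun z : 'rV[R]_n * 'rV[R]_n => z.2) x by apply: diff_snd.
have dF2 : differentiable (fun z => (F z).2) x by apply: diff_snd.
have dFe : forall i, differentiable (fun z => (F z).2 0 i) x.
  move=> i; exact: (differentiable_comp dF2 (differentiable_coord _ 0 i)).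
have dxe : forall i, differentiable (fun z : 'rV[R]_n * 'rV[R]_n => z.2 0 i) x.
  move=> i; exact: (differentiable_comp dsnd (differentiable_coord _ 0 i)).
have De : forall v i, 'D_v (fun z => (F z).2 0 i) x = ('D_v F x).2 0 i.
  by move=> v i; rewrite (D_entry R _ n i (fun z => (F z).2)) // D_snd.
have Dxe : forall v i, 'D_v (fun z : 'rV[R]_n * 'rV[R]_n => z.2 0 i) x = v.2 0 i.
  move=> v i; rewrite (D_entry R _ n i (fun z => z.2)) //.
  by rewrite (D_snd R _ _ _ (fun z => z) x v did) derive_id.
have DE : forall v i,
  tau^-1 *: (('D_v F x).2 0 i - v.2 0 i) = 'D_('D_v G x) ('D_(ebasis R i, 0) L) (G x) /\
  2^-1 *: (('D_v F x).2 0 i + v.2 0 i) = 'D_('D_v G x) ('D_(0, ebasis R i) L) (G x).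
  move=> v i; have [e1 e2] := E i; split.
  - have := near_eq_derive v e1.
    rewrite D_scale_fun; last exact: differentiableB.
    rewrite (D_sub_fun R _ _ _ _ x v (dFe i) (dxe i)) De Dxe => ->.
    exact: (D_comp R _ _ _ ('D_(ebasis R i, 0) L) G x v dG (d2 _ _)).
  - have := near_eq_derive v e2.
    rewrite D_scale_fun; last exact: differentiableD.
    rewrite (D_add_fun R _ _ _ _ x v (dFe i) (dxe i)) De Dxe => ->.
    exact: (D_comp R _ _ _ ('D_(0, ebasis R i) L) G x v dG (d2 _ _)).
set hu := 'D_u G x; set hw := 'D_w G x.
have s1 := Dlin R n L (G x) hu hw d1 d2.
have s2 := Dlin R n L (G x) hw hu d1 d2.
have sym := schwarz R _ L (G x) hw hu d1 d2 d3.
apply/eqP; rewrite -subr_eq0 /omega -sumrB.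
have -> : \sum_(i < n) (('D_u F x).2 0 i * ('D_w F x).1 0 i - ('D_w F x).2 0 i * ('D_u F x).1 0 i -
     (u.2 0 i * w.1 0 i - w.2 0 i * u.1 0 i)) =
  tau * (\sum_(i < n) (hw.1 0 i * 'D_hu ('D_(ebasis R i, 0) L) (G x) +
                       hw.2 0 i * 'D_hu ('D_(0, ebasis R i) L) (G x)) -
         \sum_(i < n) (hu.1 0 i * 'D_hw ('D_(ebasis R i, 0) L) (G x) +
                       hu.2 0 i * 'D_hw ('D_(0, ebasis R i) L) (G x))).
  rewrite -sumrB mulr_sumr; apply: eq_bigr => i _.
  have [e1u e2u] : tau^-1 * (('D_u F x).2 0 i - u.2 0 i) = 'D_hu ('D_(ebasis R i, 0) L) (G x) /\
    2^-1 * (('D_u F x).2 0 i + u.2 0 i) = 'D_hu ('D_(0, ebasis R i) L) (G x) := DE u i.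
  have [e1w e2w] : tau^-1 * (('D_w F x).2 0 i - w.2 0 i) = 'D_hw ('D_(ebasis R i, 0) L) (G x) /\
    2^-1 * (('D_w F x).2 0 i + w.2 0 i) = 'D_hw ('D_(0, ebasis R i) L) (G x) := DE w i.
  have t0 : tau != 0 by rewrite gt_eqF.
  have hu1 : hu.1 0 i = 2^-1 * (('D_u F x).1 0 i + u.1 0 i) by rewrite /hu (DG u) !mxE.
  have hu2 : hu.2 0 i = tau^-1 * (('D_u F x).1 0 i - u.1 0 i) by rewrite /hu (DG u) !mxE.
  have hw1 : hw.1 0 i = 2^-1 * (('D_w F x).1 0 i + w.1 0 i) by rewrite /hw (DG w) !mxE.
  have hw2 : hw.2 0 i = tau^-1 * (('D_w F x).1 0 i - w.1 0 i) by rewrite /hw (DG w) !mxE.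
  exact: (@alg R _ _ _ _ _ _ _ _ _ _ _ _ _ _ _ _ _ t0 e1u e2u e1w e2w hu1 hu2 hw1 hw2).
have key : forall a b : R, a = b -> tau * (a - b) == 0.
  by move=> a b ->; rewrite subrr mulr0.
have S12 := etrans (esym s1) (etrans sym s2).
exact: (key _ _ S12).
Qed.
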